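(* Every $2$-connected finitely separable graph is countable.
   Context: Two vertices of a graph $G$ are finitely separable if some finite set of edges of $G$ separates them in $G$. A graph is finitely separable if every pair of its vertices is finitely separable. *)

(* Defs.v *)
From Stdlib Require Import List Relations Relation_Operators.
Import ListNotations.

Record graph (V : Type) : Type := Graph {
  adj : V -> V -> Prop;
  adj_sym : forall x y, adj x y -> adj y x;
  adj_irrefl : forall x, ~ adj x x
}.
Arguments adj {V} g x y.

Definition joined {V : Type} (r : V -> V -> Prop) (u v : V) : Prop :=
  clos_refl_trans V r u v.

Definition del_vertices {V : Type} (G : graph V) (X : V -> Prop) : V -> V -> Prop :=
  fun x y => adj G x y /\ ~ X x /\ ~ X y.

Definition connected {V : Type} (G : graph V) : Prop :=
  (exists v : V, True) /\ forall u v : V, joined (adj G) u v.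

Definition connected_minus {V : Type} (G : graph V) (X : V -> Prop) : Prop :=
  (exists v : V, ~ X v) /\
  forall u v : V, ~ X u -> ~ X v -> joined (del_vertices G X) u v.

(* 2-connected (Diestel): more than 2 vertices, and G - X connected for
   every vertex set X with |X| < 2 (i.e. X empty or a single vertex). *)
Definition two_connected {V : Type} (G : graph V) : Prop :=
  (exists a b c : V, a <> b /\ a <> c /\ b <> c) /\
  connected_minus G (fun _ => False) /\
  forall x : V, connected_minus G (fun y => y = x).

(* A finite set F of edges, given as a list of vertex pairs each of which
   is an edge; the pair (a,b) represents the edge {a,b}. *)
Definition edge_list {V : Type} (G : graph V) (F : list (V * V)) : Prop :=
  forall a b, In (a, b) F -> adj G a b.

Definition del_edges {V : Type} (G : graph V) (F : list (V * V)) : V -> V -> Prop :=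
  fun x y => adj G x y /\ ~ In (x, y) F /\ ~ In (y, x) F.

Definition separates {V : Type} (G : graph V) (F : list (V * V)) (u v : V) : Prop :=
  ~ joined (del_edges G F) u v.

Definition finitely_separable_pair {V : Type} (G : graph V) (u v : V) : Prop :=
  exists F : list (V * V), edge_list G F /\ separates G F u v.

Definition finitely_separable {V : Type} (G : graph V) : Prop :=
  forall u v : V, u <> v -> finitely_separable_pair G u v.

Definition countable (V : Type) : Prop :=
  exists f : V -> nat, forall x y, f x = f y -> x = y.

(* Main.v *)
Require Import Defs.
From Stdlib Require Import List Relations Relation_Operators Lia Arith Cantor Classical ClassicalEpsilon.
Import ListNotations.

Lemma choice_fun {A B : Type} (P : A -> B -> Prop) :
  (forall a, exists b, P a b) -> exists f : A -> B, forall a, P a (f a).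
Proof.
  intros H. exists (fun a => proj1_sig (constructive_indefinite_description _ (H a))).
  intro a. exact (proj2_sig (constructive_indefinite_description _ (H a))).
Qed.

Fixpoint pathn {V : Type} (R : V -> V -> Prop) (n : nat) (a b : V) : Prop :=
  match n with 0 => a = b | S n' => exists c, pathn R n' a c /\ R c b end.

Lemma rtn1_pathn {V : Type} (R : V -> V -> Prop) a b :
  clos_refl_trans V R a b -> exists n, pathn R n a b.
Proof.
  intro H. apply clos_rt_rtn1_iff in H. induction H as [|y z Hyz _ IH].
  - exists 0. reflexivity.
  - destruct IH as [n Hn]. exists (S n). simpl. eauto.
Qed.

Lemma min_exists (P : nat -> Prop) : (exists n, P n) -> exists n, P n /\ forall m, P m -> n <= m.
Proof.
  intros [n Hn]. apply NNPP. intro Hno.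
  assert (forall k, forall j, j <= k -> ~ P j) as Hall.
  { induction k; intros j Hj HP.
    - apply Hno. exists j. split; auto. intros m _. lia.
    - apply Hno. exists j. split; auto. intros m Hm.
      destruct (le_lt_dec j m); auto. exfalso. apply (IHk m); auto; lia. }
  exact (Hall n n (le_n n) Hn).
Qed.

Fixpoint itf {A : Type} (f : A -> A) (n : nat) (a : A) : A :=
  match n with 0 => a | S n' => f (itf f n' a) end.

Lemma itf_add {A : Type} (f : A -> A) a b y : itf f (a + b) y = itf f a (itf f b y).
Proof. induction a; simpl; congruence. Qed.

Lemma nbr_countable (V : Type) (G : graph V) (v : V)
  (Hc : connected_minus G (fun y => y = v)) (Hfs : finitely_separable G) :
  exists e : nat -> V, forall t, adj G t v -> exists n, e n = t.
Proof.
  destruct Hc as [[x Hx] Hc].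
  set (H := del_vertices G (fun y => y = v)).
  assert (Hdex : forall y, exists n, y <> v -> pathn H n x y /\ forall m, pathn H m x y -> n <= m).
  { intro y. destruct (classic (y = v)) as [Hy|Hy].
    - exists 0. intro; contradiction.
    - destruct (min_exists (fun n => pathn H n x y)) as [n Hn].
      + apply rtn1_pathn. apply Hc; auto.
      + exists n. intros _. exact Hn. }
  destruct (choice_fun _ Hdex) as [d Hd]. clear Hdex.
  assert (Hpex : forall y, exists p, y <> v -> 0 < d y -> H p y /\ d p + 1 = d y).
  { intro y. destruct (classic (y <> v /\ 0 < d y)) as [[Hy Hpos]|Hn].
    - destruct (Hd y Hy) as [Hp Hmin]. destruct (d y) as [|n] eqn:E; [lia|].
      simpl in Hp. destruct Hp as [c [Hpc Hcy]]. exists c. intros _ _. split; auto.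
      assert (Hcv : c <> v) by (destruct Hcy as [_ [Hcv _]]; exact Hcv).
      destruct (Hd c Hcv) as [Hpc' Hminc].
      pose proof (Hminc n Hpc).
      assert (S n <= S (d c)). { apply Hmin. simpl. eauto. }
      lia.
    - exists x. intros; exfalso; apply Hn; auto. }
  destruct (choice_fun _ Hpex) as [par Hpar]. clear Hpex.
  assert (Hdx : d x = 0).
  { destruct (Hd x Hx) as [_ Hm]. specialize (Hm 0 eq_refl). lia. }
  assert (Hd0 : forall y, y <> v -> d y = 0 -> y = x).
  { intros y Hy H0. destruct (Hd y Hy) as [Hp _]. rewrite H0 in Hp. simpl in Hp. auto. }
  assert (Hit : forall m y, y <> v -> m <= d y -> itf par m y <> v /\ d (itf par m y) = d y - m).
  { induction m; intros y Hy Hm.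
    - simpl. split; auto. lia.
    - destruct (IHm y Hy ltac:(lia)) as [Hz Hdz]. simpl.
      destruct (Hpar (itf par m y) Hz ltac:(lia)) as [[_ [Hpv _]] Hdp].
      split; auto. lia. }
  assert (Claim : forall k m u, u <> v -> d u + m = k -> exists l, forall t, adj G t v -> d t = k ->
             itf par m t = u -> In t l).
  { intros k m. induction m; intros u Hu Hum.
    - exists [u]. intros t _ _ Ht. simpl in Ht. left; auto.
    - destruct (Hfs u v Hu) as [F [_ HFsep]].
      assert (IHf : forall c, exists l, c <> v -> d c + m = k -> forall t, adj G t v -> d t = k ->
             itf par m t = c -> In t l).
      { intro c. destruct (classic (c <> v /\ d c + m = k)) as [[H1 H2]|Hn].
        - destruct (IHm c H1 H2) as [l Hl]. exists l. intros; auto.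
        - exists []. intros; exfalso; auto. }
      destruct (choice_fun _ IHf) as [Lm HLm]. clear IHf.
      set (childOf := fun y => itf par (d y - (d u + 1)) y).
      set (cands := flat_map (fun p => [childOf (fst p); childOf (snd p)]) F).
      exists (flat_map Lm cands). intros t Htv Hdt Hitt.
      assert (Htnv : t <> v) by (intro E; subst t; exact (adj_irrefl _ G v Htv)).
      set (c := itf par m t) in *.
      simpl in Hitt. fold c in Hitt.
      destruct (Hit m t Htnv ltac:(lia)) as [Hcv Hdc]. fold c in Hcv, Hdc.
      apply in_flat_map. exists c. split; [| exact (HLm c Hcv ltac:(lia) t Htv Hdt eq_refl)].
      destruct (classic (In c cands)) as [|Hnc]; auto. exfalso. apply HFsep.
      assert (Hnot : forall y, childOf y = c -> forall z, ~ In (y, z) F /\ ~ In (z, y) F).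
      { intros y Hy z. split; intro Hin; apply Hnc; rewrite <- Hy; unfold cands;
          apply in_flat_map; eexists; (split; [exact Hin| cbn [fst snd]; simpl In; tauto]). }
      assert (Down : forall n y, y <> v -> d y = d u + 1 + n -> itf par n y = c ->
                 joined (del_edges G F) u y).
      { induction n; intros y Hy Hdy Hny.
        - simpl in Hny. subst y.
          destruct (Hpar c Hcv ltac:(lia)) as [[Hadj _] _]. rewrite Hitt in Hadj.
          apply rt_step. unfold del_edges.
          assert (Hch : childOf c = c).
          { unfold childOf. replace (d c - (d u + 1)) with 0 by lia. reflexivity. }
          destruct (Hnot c Hch u) as [N1 N2]. auto.
        - destruct (Hpar y Hy ltac:(lia)) as [[Hadj [Hpv _]] Hdp].
          assert (Hny' : itf par n (par y) = c).
          { rewrite <- Hny. replace (S n) with (n + 1) by lia. rewrite itf_add. reflexivity. }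
          apply rt_trans with (par y).
          + apply IHn; auto. lia.
          + apply rt_step. unfold del_edges.
            assert (Hch : childOf y = c).
            { unfold childOf. replace (d y - (d u + 1)) with (S n) by lia. exact Hny. }
            destruct (Hnot y Hch (par y)) as [N1 N2]. auto. }
      apply rt_trans with t.
      + apply (Down m t Htnv); auto. lia.
      + apply rt_step. unfold del_edges.
        assert (Hch : childOf t = c).
        { unfold childOf. replace (d t - (d u + 1)) with m by lia. reflexivity. }
        destruct (Hnot t Hch v) as [N1 N2]. auto. }
  assert (Hk : forall k, exists l, forall t, adj G t v -> d t = k -> In t l).
  { intro k. destruct (Claim k k x Hx ltac:(lia)) as [l Hl]. exists l.
    intros t Htv Hdt. apply Hl; auto.
    assert (Htnv : t <> v) by (intro E; subst t; exact (adj_irrefl _ G v Htv)).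
    destruct (Hit k t Htnv ltac:(lia)) as [H1 H2]. apply Hd0; auto. lia. }
  destruct (choice_fun _ Hk) as [L HL].
  exists (fun n => nth (snd (Cantor.of_nat n)) (L (fst (Cantor.of_nat n))) v).
  intros t Htv. destruct (In_nth _ _ v (HL (d t) t Htv eq_refl)) as [i [_ Hi]].
  exists (Cantor.to_nat (d t, i)). rewrite Cantor.cancel_of_to. simpl. exact Hi.
Qed.
Lemma countable_of_nbr_enum (V : Type) (G : graph V) (r : V)
  (conn : forall w, clos_refl_trans V (adj G) r w)
  (en : V -> nat -> V) (Hen : forall y z, adj G y z -> exists i, en y i = z) :
  countable V.
Proof.
  pose (E := fix E (k : nat) (n : nat) : V :=
     match k with 0 => r | S k' => en (E k' (fst (Cantor.of_nat n))) (snd (Cantor.of_nat n)) end).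
  pose (e := fun n => E (fst (Cantor.of_nat n)) (snd (Cantor.of_nat n))).
  assert (He : forall w, exists n, e n = w).
  { intro w. specialize (conn w). apply clos_rt_rtn1_iff in conn.
    assert (exists k m, E k m = w) as (k & m & Hkm).
    { induction conn as [|y z Hyz _ IH].
      - exists 0, 0. reflexivity.
      - destruct IH as (k & m & Hkm). destruct (Hen y z Hyz) as (i & Hi).
        exists (S k), (Cantor.to_nat (m, i)).
        change (en (E k (fst (Cantor.of_nat (Cantor.to_nat (m, i))))) (snd (Cantor.of_nat (Cantor.to_nat (m, i)))) = z).
        rewrite Cantor.cancel_of_to. simpl.
        rewrite Hkm. exact Hi. }
    exists (Cantor.to_nat (k, m)). unfold e. rewrite Cantor.cancel_of_to. exact Hkm. }
  destruct (choice_fun (fun w n => e n = w) He) as (f & Hf).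
  exists f. intros a b Hab. rewrite <- (Hf a), <- (Hf b), Hab. reflexivity.
Qed.

Theorem mainTheorem4 (V : Type) (G : graph V) :
  two_connected G -> finitely_separable G -> countable V.
Proof.
  intros [[r [b [c _]]] [[_ Hc0] Hcv]] Hfs.
  assert (Hen : forall v, exists e : nat -> V, forall t, adj G t v -> exists n, e n = t).
  { intro v. apply nbr_countable; auto. }
  destruct (choice_fun _ Hen) as [en Hen'].
  apply (countable_of_nbr_enum V G r) with (en := en).
  - intro w. specialize (Hc0 r w (fun h => h) (fun h => h)).
    induction Hc0 as [a0 b0 Hab | | ].
    + apply rt_step. destruct Hab; auto.
    + apply rt_refl.
    + eapply rt_trans; eauto.
  - intros y z Hyz. apply Hen'. apply adj_sym. exact Hyz.
Qed.
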